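(* Let $n\ge k\ge 1$ be integers, $i\in\{1,\ldots,n\}$, and let $H\sim\text{Hyp}(n,i,k)$ be such that $\mathbb{E}(H)\le 1$. Then $\mathbb{P}(H=1) \ge \mathbb{P}(H\ge 2)$.
   Context: $\text{Hyp}(n,i,k)$ denotes the hypergeometric distribution: the number of black marbles in a sample without replacement of size $k$ from an urn with $i$ black and $n-i$ white marbles, i.e. $\mathbb{P}(H=j)=\binom{i}{j}\binom{n-i}{k-j}/\binom{n}{k}$. One has $\mathbb{E}(H)=ik/n$. *)

(* Defs.v *)
From mathcomp Require Import all_boot all_order all_algebra.
Set Implicit Arguments. Unset Strict Implicit. Unset Printing Implicit Defensive.
Import Order.TTheory GRing.Theory Num.Theory.
Local Open Scope ring_scope.

Definition hyp_pmf (R : realFieldType) (n i k j : nat) : R :=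
  ('C(i, j) * 'C(n - i, k - j))%:R / 'C(n, k)%:R.

Definition hyp_mean (R : realFieldType) (n i k : nat) : R :=
  \sum_(0 <= j < k.+1) j%:R * hyp_pmf R n i k j.

Definition hyp_ge (R : realFieldType) (n i k m : nat) : R :=
  \sum_(m <= j < k.+1) hyp_pmf R n i k j.

(* Main.v *)
Require Import Defs.
From mathcomp Require Import all_boot all_order all_algebra.
From mathcomp Require Import zify.
Set Implicit Arguments. Unset Strict Implicit. Unset Printing Implicit Defensive.
Import Order.TTheory GRing.Theory Num.Theory.

Lemma key (n i k j : nat) : 1 <= i -> i <= n -> 1 <= k -> i * k <= n -> 1 <= j -> j < k ->
  2 * ('C(i, j.+1) * 'C(n - i, k - j.+1)) <= 'C(i, j) * 'C(n - i, k - j).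
Proof.
move=> i1 iN k1 ikn j1 jk.
set m := n - i. set t := k - j.+1.
have -> : k - j = t.+1 by rewrite /t; (timeout 20 lia).
have H1 := mul_bin_left i j. have H2 := mul_bin_left m t.
set A := 'C(i, j.+1) in H1 *. set B := 'C(m, t.+1) in H2 *.
set a := 'C(i, j) in H1 *. set b := 'C(m, t) in H2 *.
have P : 0 < j.+1 * t.+1 by [].
rewrite -(leq_pmul2l P).
have -> : j.+1 * t.+1 * (2 * (A * b)) = 2 * t.+1 * b * (j.+1 * A) by (timeout 20 lia).
have -> : j.+1 * t.+1 * (a * B) = j.+1 * a * (t.+1 * B) by (timeout 20 lia).
rewrite H1 H2.
have -> : 2 * t.+1 * b * ((i - j) * a) = (2 * (i-j) * t.+1) * (a * b) by (timeout 20 lia).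
have -> : j.+1 * a * ((m - t) * b) = ((m - t) * j.+1) * (a * b) by (timeout 20 lia).
apply: leq_mul => //.
have ik1 : i + k <= n + 1.
  have : i + k <= i * k + 1 by case: (i) i1 => // a0 _; case: (k) k1 => // b0 _; (timeout 20 nia).
  (timeout 20 lia).
have Ew : m - t = ((n + 1 - i - k)) + j.
  rewrite /m /t. (timeout 20 lia).
have Hu : (i - j) * t.+1 <= (i - 1) * (k - 1).
  apply: leq_mul; rewrite /t; (timeout 20 lia).
have Hp : (i - 1) * (k - 1) <= (n + 1 - i - k).
  have : (i - 1) * (k - 1) + i + k = i * k + 1 by case: (i) i1 => // a0 _; case: (k) k1 => // b0 _; rewrite !subn1 /=; (timeout 20 nia).
  (timeout 20 lia).
rewrite Ew.
have : 2 * ((n + 1 - i - k) + j) <= ((n + 1 - i - k) + j) * j.+1.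
  by rewrite mulnC; apply: leq_mul.
move=> H; apply: leq_trans H; rewrite -mulnA leq_mul2l /=.
exact: leq_trans Hu (leq_trans Hp (leq_addr _ _)).
Qed.

Lemma tail (X : nat -> nat) k : (forall j, 1 <= j -> j < k -> 2 * X j.+1 <= X j) ->
  forall t, 1 <= t -> t <= k -> \sum_(2 <= j < t.+1) X j + X t <= X 1.
Proof.
move=> H; elim=> [//|t IH] _ tk.
case: t IH tk => [|t] IH tk; first by rewrite big_geq.
rewrite big_nat_recr //=.
have := IH isT (ltnW tk). have := H t.+1 isT tk. (timeout 20 lia).
Qed.

Lemma meansum (n i k : nat) : 1 <= i -> i <= n -> 1 <= k ->
  \sum_(0 <= j < k.+1) j * ('C(i, j) * 'C(n - i, k - j)) = i * 'C(n.-1, k.-1).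
Proof.
case: i => [//|i'] _ iN; case: k => [//|k'] _.
rewrite big_nat_recl // mul0n add0n big_mkord.
rewrite (eq_bigr (fun j : 'I_k'.+1 => i'.+1 * ('C(i', j) * 'C(n - i'.+1, k' - j)))); last first.
  move=> j _; rewrite mulnA -mul_bin_diag /= subSS; (timeout 20 lia).
rewrite -big_distrr /= binomial.Vandermonde; congr (_ * 'C(_, _)); (timeout 20 lia).
Qed.

Local Open Scope ring_scope.

Theorem lemma2 (R : realFieldType) (n k i : nat) :
  (1 <= k)%N -> (k <= n)%N -> (1 <= i)%N -> (i <= n)%N ->
  hyp_mean R n i k <= 1 ->
  hyp_ge R n i k 2 <= hyp_pmf R n i k 1.
Proof.
move=> k1 kn i1 iN Hm.
have c0 : (0 < 'C(n, k))%N by rewrite bin_gt0.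
have cpos : 0 < ('C(n, k))%:R :> R by rewrite ltr0n.
have Emean : hyp_mean R n i k = (i * 'C(n.-1, k.-1))%:R / ('C(n, k))%:R.
  rewrite /hyp_mean -meansum // natr_sum mulr_suml; apply: eq_bigr => j _.
  by rewrite /hyp_pmf !natrM !mulrA.
rewrite Emean ler_pdivrMr // mul1r ler_nat in Hm.
have C0 : (0 < 'C(n.-1, k.-1))%N by rewrite bin_gt0; lia.
have ikn : (i * k <= n)%N.
  rewrite -(leq_pmul2r C0) mul_bin_diag prednK //.
  have -> : (i * k * 'C(n.-1, k.-1) = k * (i * 'C(n.-1, k.-1)))%N by lia.
  by rewrite leq_pmul2l.
have -> : hyp_ge R n i k 2 =
   (\sum_(2 <= j < k.+1) ('C(i, j) * 'C(n - i, k - j)))%:R / ('C(n, k))%:R.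
  by rewrite /hyp_ge natr_sum mulr_suml.
rewrite /hyp_pmf ler_pM2r ?invr_gt0 // ler_nat.
have := @tail (fun j => 'C(i, j) * 'C(n - i, k - j))%N k
  (fun j j1 jk => key i1 iN k1 ikn j1 jk) k k1 (leqnn k).
lia.
Qed.
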